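(* Every pseudoforest $G$ with $\operatorname{cycles}(G)=\kappa(G)$ can be transformed into a unicyclic graph by a sequence of p-switches; that is, there are 2-switches $\tau_1,\dots,\tau_k$ ($k\ge0$) such that, with $G_0=G$ and $G_i=\tau_i(G_{i-1})$, each $\tau_i$ is a p-switch over $G_{i-1}$ and $G_k$ is unicyclic.
   Context: Graphs are finite, simple, undirected, labeled. A unicyclic graph is a connected graph with exactly one cycle; a pseudoforest is a graph each of whose components is a tree or a unicyclic graph. $\kappa(G)$ is the number of connected components and $\operatorname{cycles}(G)$ the number of subgraphs of $G$ isomorphic to a cycle. For vertices $a,b,c,d$, $A=\binom{a\ b}{c\ d}$ is interchangeable in $G$ if $ab,cd\in E(G)$, $\{a,b\}\cap\{c,d\}=\varnothing$, $ac,bd\notin E(G)$; the 2-switch $\tau_A$ sends $G$ to $G-ab-cd+ac+bd$ if $A$ is interchangeable and to $G$ otherwise (trivial). A nontrivial 2-switch $\tau$ over a pseudoforest $G$ is a p-switch if $\tau(G)$ is a pseudoforest. *)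

(* Defs.v *)
From mathcomp Require Import all_boot.
Set Implicit Arguments. Unset Strict Implicit. Unset Printing Implicit Defensive.

(* A finite simple labeled graph on the vertex type V is given by its edge set
   E : {set {set V}}, each edge being a 2-element subset of V. *)
Section Graphs.
Variable V : finType.
Implicit Types (E F C : {set {set V}}) (W U : {set V}).

Definition simple_graph E : bool := [forall e in E, #|e| == 2].

Definition adj F : rel V := fun x y => (x != y) && ([set x; y] \in F).

(* graph (W, F): vertex set W, edge set F (edges inside W) *)
Definition comp_of F W (x : V) : {set V} := [set y in W | connect (adj F) x y].

Definition kappa_on W F : nat := #|[set comp_of F W x | x in W]|.

Definition cycle_subgraph W F (UC : {set V} * {set {set V}}) : bool :=
  [&& UC.1 \subset W, UC.2 \subset F &
   [exists n : 'I_#|V|.+1, (3 <= n) &&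
     [exists f : {ffun 'I_n -> V}, [&& injectiveb f,
        UC.1 == [set f i | i : 'I_n] &
        UC.2 == [set [set f i; f (ordS i)] | i : 'I_n]]]]].

Definition cycles_on W F : nat := #|[set UC | cycle_subgraph W F UC]|.

Definition kappa E := kappa_on [set: V] E.
Definition cycles E := cycles_on [set: V] E.

Definition tree_on W F := (kappa_on W F == 1) && (cycles_on W F == 0).
Definition unicyclic_on W F := (kappa_on W F == 1) && (cycles_on W F == 1).

Definition unicyclic E := unicyclic_on [set: V] E.

Definition induced E W := [set e in E | e \subset W].

Definition pseudoforest E : bool :=
  [forall x, tree_on (comp_of E [set: V] x) (induced E (comp_of E [set: V] x))
          || unicyclic_on (comp_of E [set: V] x) (induced E (comp_of E [set: V] x))].

(* A = (a b / c d) is interchangeable in E *)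
Definition interchangeable E (A : V * V * V * V) : bool :=
  let: (a, b, c, d) := A in
  [&& [set a; b] \in E, [set c; d] \in E,
      [disjoint [set a; b] & [set c; d]],
      [set a; c] \notin E & [set b; d] \notin E].

Definition tau (A : V * V * V * V) E : {set {set V}} :=
  let: (a, b, c, d) := A in
  if interchangeable E A
  then ((E :\ [set a; b]) :\ [set c; d]) :|: [set [set a; c]; [set b; d]]
  else E.

Definition pswitch E A : bool :=
  [&& pseudoforest E, tau A E != E & pseudoforest (tau A E)].

Fixpoint pswitch_seq E (s : seq (V * V * V * V)) E' : Prop :=
  match s with
  | [::] => E' = E
  | A :: s' => pswitch E A /\ pswitch_seq (tau A E) s' E'
  end.

End Graphs.

(* Main.v *)
Require Import Defs.
From mathcomp Require Import all_boot.
From mathcomp Require Import zify.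
Set Implicit Arguments. Unset Strict Implicit. Unset Printing Implicit Defensive.

Section G.
Variable V : finType.
Implicit Types (E F : {set {set V}}) (W U : {set V}).

Notation conn F := (connect (adj F)).

Lemma adj_sym F : symmetric (adj F).
Proof. by move=> x y; rewrite /adj eq_sym setUC. Qed.

Lemma conn_sym F x y : conn F x y = conn F y x.
Proof. exact: (sym_connect_sym (@adj_sym F)). Qed.

Lemma conn_trans F x y z : conn F x y -> conn F y z -> conn F x z.
Proof. exact: connect_trans. Qed.

Lemma conn0 F x : conn F x x.
Proof. exact: connect0. Qed.

Lemma conn1 F x y : x != y -> [set x; y] \in F -> conn F x y.
Proof. by move=> xy e; apply: connect1; rewrite /adj xy e. Qed.

Lemma conn_mono F F' x y : F \subset F' -> conn F x y -> conn F' x y.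
Proof.
move=> sF; apply: connect_sub => p q /andP[pq e]; apply: connect1.
by rewrite /adj pq (subsetP sF).
Qed.

Lemma set2_eq (x y p q : V) : p != q -> [set p; q] = [set x; y] ->
  (p = x /\ q = y) \/ (p = y /\ q = x).
Proof.
move=> pq E.
have hp : p \in [set x; y] by rewrite -E !inE eqxx.
have hq : q \in [set x; y] by rewrite -E !inE eqxx orbT.
move: hp hq; rewrite !inE => /orP[]/eqP hp /orP[]/eqP hq; subst.
- by rewrite eqxx in pq.
- by left.
- by right.
- by rewrite eqxx in pq.
Qed.

Lemma conn_add_conn F x y : conn F x y -> conn ([set x; y] |: F) =2 conn F.
Proof.
move=> cxy z w; apply/idP/idP; last by apply: conn_mono; apply: subsetUr.
apply: connect_sub => p q /andP[pq]; rewrite in_setU1 => /orP[/eqP e|e].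
  by case: (set2_eq pq e) => -[-> ->] //; move: cxy; rewrite conn_sym.
by apply: connect1; rewrite /adj pq e.
Qed.

Lemma conn_add F x y z w : conn ([set x; y] |: F) z w =
  [|| conn F z w, conn F z x && conn F y w | conn F z y && conn F x w].
Proof.
set F' := [set x; y] |: F.
have sF : F \subset F' by apply: subsetUr.
have cxy : conn F' x y.
  case: (eqVneq x y) => [->|xy]; first exact: conn0.
  by apply: conn1 => //; rewrite /F' setU11.
apply/idP/idP; last first.
  case/or3P => [/(conn_mono sF)//|/andP[h1 h2]|/andP[h1 h2]].
    apply: (conn_trans (conn_mono sF h1)); exact: conn_trans cxy (conn_mono sF h2).
  apply: (conn_trans (conn_mono sF h1)); rewrite conn_sym in cxy.
  exact: conn_trans cxy (conn_mono sF h2).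
case/connectP => s; elim: s z => [|q s IH] z /=.
  by move=> _ ->; rewrite conn0.
rewrite {1}/adj => /andP[/andP[zq]]; rewrite in_setU1 => ein /IH H /H {H IH}.
case/orP: ein => [/eqP e|e].
  case: (set2_eq zq e) => -[-> ->];
    case/or3P => [h|/andP[_ h]|/andP[_ h]]; by rewrite h ?conn0 ?orbT.
have czq : conn F z q by apply: connect1; rewrite /adj zq e.
case/or3P => [h|/andP[h1 h2]|/andP[h1 h2]].
- by rewrite (conn_trans czq h).
- by rewrite (conn_trans czq h1) h2 orbT.
- by rewrite (conn_trans czq h1) h2 !orbT.
Qed.


Lemma card_imset_eq (T T1 T2 : finType) (f1 : T -> T1) (f2 : T -> T2) (A : {set T}) :
  {in A &, forall z t, (f1 z == f1 t) = (f2 z == f2 t)} -> #|f1 @: A| = #|f2 @: A|.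
Proof.
move=> H.
case: (set_0Vmem A) => [eA|[z0 z0A]]; first by rewrite eA !imset0 !cards0.
pose h (Y : T2) := f1 (odflt z0 [pick z in A | f2 z == Y]).
have hE : {in A, h \o f2 =1 f1}.
  move=> t tA; rewrite /h /=; case: pickP => [z /andP[zA /eqP e]|/(_ t)] /=.
    by apply/eqP; rewrite H // e.
  by rewrite tA eqxx.
rewrite -(eq_in_imset hE) imset_comp card_in_imset //.
move=> Y1 Y2 /imsetP[z zA ->] /imsetP[t tA ->].
have /= -> := hE z zA; have /= -> := hE t tA.
by move/eqP; rewrite H // => /eqP.
Qed.

Lemma comp_eq F W x y : x \in W -> y \in W ->
  (comp_of F W x == comp_of F W y) = conn F x y.
Proof.
move=> xW yW; apply/eqP/idP => [e|cxy].
  have : y \in comp_of F W y by rewrite inE yW conn0.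
  by rewrite -e inE => /andP[].
apply/setP => z; rewrite !inE; case: (z \in W) => //=.
apply/idP/idP => h; first by rewrite conn_sym in cxy; exact: conn_trans cxy h.
exact: conn_trans cxy h.
Qed.

Lemma kappa_conn_eq W F F' : conn F =2 conn F' -> kappa_on W F = kappa_on W F'.
Proof.
move=> e; rewrite /kappa_on (@eq_imset _ _ (comp_of F W) (comp_of F' W)) // => x.
by apply/setP => z; rewrite !inE e.
Qed.

Lemma kappa_add_disc W F x y : x \in W -> y \in W -> ~~ conn F x y ->
  (kappa_on W ([set x; y] |: F)).+1 = kappa_on W F.
Proof.
move=> xW yW nxy; set F' := [set x; y] |: F; rewrite /kappa_on.
set W0 := [set z in W | ~~ conn F x z].
have yW0 : y \in W0 by rewrite inE yW.
have e1 : [set comp_of F' W z | z in W] = [set comp_of F' W z | z in W0].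
  apply/eqP; rewrite eqEsubset; apply/andP; split; last first.
    by apply: imsetS; apply/subsetP => z; rewrite inE => /andP[].
  apply/subsetP => K /imsetP[z zW ->].
  case: (boolP (conn F x z)) => cz.
    apply/imsetP; exists y => //; apply/eqP; rewrite comp_eq //.
    by rewrite -/F' conn_add conn0 (conn_sym F z x) cz !orbT.
  by apply: imset_f; rewrite inE zW.
have e2 : [set comp_of F W z | z in W] = comp_of F W x |: [set comp_of F W z | z in W0].
  apply/eqP; rewrite eqEsubset; apply/andP; split.
    apply/subsetP => K /imsetP[z zW ->]; rewrite in_setU1.
    case: (boolP (conn F x z)) => cz.
      by rewrite eq_sym comp_eq // cz.
    by rewrite imset_f ?orbT // inE zW.
  rewrite subUset sub1set imset_f //=.
  by apply: imsetS; apply/subsetP => z; rewrite inE => /andP[].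
have nin : comp_of F W x \notin [set comp_of F W z | z in W0].
  apply/imsetP => -[z]; rewrite inE => /andP[zW nz] /eqP.
  by rewrite comp_eq // (negbTE nz).
rewrite e1 e2 cardsU1 nin add1n; congr _.+1.
apply: card_imset_eq => z t; rewrite !inE => /andP[zW nz] /andP[tW nt].
rewrite !comp_eq // -/F' conn_add.
by rewrite (conn_sym F z x) (negbTE nz) (negbTE nt) /= !andbF !orbF.
Qed.

Lemma kappa_add_le W F x y : x \in W -> y \in W ->
  kappa_on W F <= (kappa_on W ([set x; y] |: F)).+1.
Proof.
move=> xW yW; case: (boolP (conn F x y)) => cxy.
  by rewrite (kappa_conn_eq W (conn_add_conn cxy)).
by rewrite (kappa_add_disc xW yW cxy).
Qed.

Lemma conn_set0 x y : conn (set0 : {set {set V}}) x y -> x = y.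
Proof.
by case/connectP => -[|q s] //= /andP[/andP[_]]; rewrite inE.
Qed.

Lemma kappa_set0 W : kappa_on W set0 = #|W|.
Proof.
rewrite /kappa_on -[in RHS](imset_id W); apply: card_imset_eq => z t zW tW.
rewrite comp_eq //; apply/idP/eqP => [/conn_set0 //|->]; exact: conn0.
Qed.

Definition wf W F := forall e, e \in F -> exists x y, [/\ x != y, e = [set x; y], x \in W & y \in W].

Lemma wf_sub W F F' : F' \subset F -> wf W F -> wf W F'.
Proof. by move=> s h e /(subsetP s) /h. Qed.

Lemma set_ind (P : {set {set V}} -> Prop) :
  P set0 -> (forall F e, e \notin F -> P F -> P (e |: F)) -> forall F, P F.
Proof.
move=> P0 PS F; move: {2}#|F| (erefl #|F|) => n; elim: n F => [|n IH] F.
  by move/cards0_eq ->.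
move=> cF; have : F != set0 by rewrite -cards_eq0 cF.
case/set0Pn => e eF; rewrite -(setD1K eF); apply: PS; first by rewrite !inE eqxx.
by apply: IH; move: cF; rewrite (cardsD1 e) eF add1n => -[].
Qed.

Lemma kappa_lb W F : wf W F -> #|W| <= kappa_on W F + #|F|.
Proof.
elim/set_ind: F => [|F e eF IH] h; first by rewrite kappa_set0 cards0 addn0.
have [x [y [xy ee xW yW]]] := h e (setU11 _ _).
have := IH (wf_sub (subsetUr _ _) h); rewrite cardsU1 eF.
have := kappa_add_le F xW yW; rewrite -ee /=. move: (kappa_on _ _) (kappa_on _ _) #|W| #|F| => a b c d. lia.
Qed.


Lemma modn_lem i n k : i < n -> k < n -> ((i.+1 + k) %% n == i) = (k.+1 == n).
Proof.
move=> lin lkn; case: (ltnP (i.+1 + k) n) => h.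
  rewrite modn_small //; apply/eqP/eqP; lia.
have -> : i.+1 + k = (i.+1 + k - n) + n by lia.
rewrite modnDr modn_small; last by lia.
apply/eqP/eqP; lia.
Qed.

Lemma iter_ordS n (j : 'I_n) k : val (iter k (@ordS n) j) = (j + k) %% n.
Proof.
elim: k => [|k IH] /=; first by rewrite addn0 modn_small.
by rewrite IH addnS -[((j + k) %% n).+1]addn1 modnDml addn1.
Qed.

Lemma ordS_neq n (i : 'I_n) : 1 < n -> ordS i != i.
Proof.
move=> n2; apply/eqP => /(congr1 val) /=.
have := ltn_ord i; case: (ltnP i.+1 n) => h1 h2.
  rewrite modn_small //; lia.
have -> : i.+1 = n by lia.
rewrite modnn; lia.
Qed.

Lemma ordS2_neq n (i : 'I_n) : 2 < n -> ordS (ordS i) != i.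
Proof.
move=> n3; apply/eqP => /(congr1 val) /=.
have := ltn_ord i; case: (ltnP i.+1 n) => h1 h2.
  rewrite (modn_small h1); case: (ltnP i.+2 n) => h3.
    rewrite modn_small //; lia.
  have -> : i.+2 = n by lia.
  rewrite modnn; lia.
have -> : i.+1 = n by lia.
rewrite modnn modn_small; lia.
Qed.

Lemma cycleP W F UC : cycle_subgraph W F UC -> exists n (f : 'I_n -> V),
  [/\ 2 < n, injective f, UC.1 = [set f i | i : 'I_n],
      UC.2 = [set [set f i; f (ordS i)] | i : 'I_n] &
      (UC.1 \subset W) /\ (UC.2 \subset F)].
Proof.
case/and3P => sW sF /existsP[n /andP[n3 /existsP[f /and3P[/injectiveP fi /eqP e1 /eqP e2]]]].
by exists n, f.
Qed.

Lemma cycle_build W F n (f : 'I_n -> V) : 2 < n -> injective f ->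
  [set f i | i : 'I_n] \subset W -> [set [set f i; f (ordS i)] | i : 'I_n] \subset F ->
  cycle_subgraph W F ([set f i | i : 'I_n], [set [set f i; f (ordS i)] | i : 'I_n]).
Proof.
move=> n3 fi sW sF; rewrite /cycle_subgraph /= sW sF /=.
have hn : n < #|V|.+1 by rewrite ltnS; have := leq_card f fi; rewrite card_ord.
apply/existsP; exists (Ordinal hn); rewrite /= n3 /=.
apply/existsP; exists (finfun f); apply/and3P; split.
- by apply/injectiveP => i j; rewrite !ffunE => /fi.
- by apply/eqP; apply: eq_imset => i; rewrite ffunE.
- by apply/eqP; apply: eq_imset => i; rewrite !ffunE.
Qed.

Lemma cycle_mono W W' F F' UC : cycle_subgraph W F UC -> W \subset W' -> F \subset F' ->
  cycle_subgraph W' F' UC.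
Proof.
case/and3P => sW sF h s1 s2; rewrite /cycle_subgraph h.
by rewrite (subset_trans sW s1) (subset_trans sF s2).
Qed.

Lemma cycle_vert W F UC z : cycle_subgraph W F UC ->
  (z \in UC.1) = [exists e in UC.2, z \in e].
Proof.
case/cycleP => n [f [n3 fi -> -> _]] /=; apply/imsetP/existsP.
  case=> i _ ->; exists [set f i; f (ordS i)]; apply/andP; split.
    by apply/imsetP; exists i.
  by rewrite !inE eqxx.
case=> e /andP[/imsetP[i _ ->]]; rewrite !inE => /orP[]/eqP->; by eexists.
Qed.

Lemma edge_inj n (f : 'I_n -> V) (i j : 'I_n) : 2 < n -> injective f ->
  [set f j; f (ordS j)] = [set f i; f (ordS i)] -> j = i.
Proof.
move=> n3 fi e.
have hj : f j \in [set f i; f (ordS i)] by rewrite -e !inE eqxx.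
have hj' : f (ordS j) \in [set f i; f (ordS i)] by rewrite -e !inE eqxx orbT.
move: hj hj'; rewrite !inE => /orP[/eqP/fi //|/eqP/fi ->] /orP[/eqP/fi|/eqP/fi].
  by move=> h; move: (ordS2_neq i n3); rewrite h eqxx.
by move/ordS_inj ->.
Qed.

Lemma cycle_edge_conn W F UC e : cycle_subgraph W F UC -> e \in UC.2 ->
  conn (F :\ e) =2 conn F.
Proof.
move=> cy; have [n [f [n3 fi e1 e2 [_ sF]]]] := cycleP cy.
rewrite e2 => /imsetP[i0 _ ee].
have eF : e \in F by apply: (subsetP sF); rewrite e2 ee; apply/imsetP; exists i0.
have chain : forall k, k < n ->
    conn (F :\ e) (f (ordS i0)) (f (iter k (@ordS n) (ordS i0))).
  elim=> [|k IH] kn /=; first exact: conn0.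
  apply: (conn_trans (IH (ltnW kn))).
  set j := iter k (@ordS n) (ordS i0).
  have jn : j != i0.
    apply/eqP => /(congr1 val); rewrite /j iter_ordS /= modnDml => /eqP.
    rewrite modn_lem //; [by rewrite eq_sym (gtn_eqF kn)|exact: ltnW].
  apply: conn1; first by rewrite (inj_eq fi) eq_sym ordS_neq // ltnW.
  rewrite !inE (subsetP sF) ?andbT; last by rewrite e2; apply/imsetP; exists j.
  apply/negP; rewrite ee => /eqP /(edge_inj n3 fi) je.
  by rewrite je eqxx in jn.
have last : iter n.-1 (@ordS n) (ordS i0) = i0.
  apply: val_inj; rewrite /= iter_ordS /= modnDml; apply/eqP.
  rewrite modn_lem //; first by rewrite prednK // ltnW // ltnW.
  by rewrite prednK ?leqnn // ltnW // ltnW.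
have cc : conn (F :\ e) (f i0) (f (ordS i0)).
  rewrite conn_sym -{2}last; apply: chain; rewrite prednK ?leqnn //.
  by rewrite ltnW // ltnW.
rewrite -{2}(setD1K eF) ee => z w.
by rewrite ee in cc *; rewrite conn_add_conn.
Qed.


Lemma adj_in F x y : adj F x y -> [set x; y] \in F.
Proof. by case/andP. Qed.

Lemma path_in W F x s : wf W F -> x \in W -> path (adj F) x s -> {subset s <= W}.
Proof.
move=> h; elim: s x => [|q s IH] x xW //= /andP[/andP[xq /h [a [b [ab e aW bW]]]] ps].
have qW : q \in W.
  have : q \in [set x; q] by rewrite !inE eqxx orbT.
  by rewrite e !inE => /orP[]/eqP->.
move=> z; rewrite inE => /orP[/eqP->//|]; exact: IH qW ps z.
Qed.

Lemma cycle_from_path W F x y : wf W F -> x != y -> [set x; y] \notin F ->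
  x \in W -> conn F x y -> exists UC, cycle_subgraph W ([set x; y] |: F) UC.
Proof.
move=> h xy nxy xW /connectP[p pp].
case: (shortenP pp) => p' pp' up' _ ly; clear pp.
have p2 : 1 < size p'.
  case: p' pp' up' ly => [|q [|r t]] //=.
    by move=> _ _ e; rewrite e eqxx in xy.
  by move=> /andP[/adj_in e _] _ ey; rewrite ey e in nxy.
set s := x :: p'; set n := size s.
have n3 : 2 < n by rewrite /n /s /=.
pose f (i : 'I_n) := nth x s i.
have fi : injective f.
  move=> i j /eqP; rewrite /f nth_uniq // => /eqP; exact: val_inj.
exists ([set f i | i : 'I_n], [set [set f i; f (ordS i)] | i : 'I_n]).
apply: cycle_build => //.
  apply/subsetP => z /imsetP[i _ ->]; rewrite /f.
  have : nth x s i \in s by apply: mem_nth.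
  rewrite inE => /orP[/eqP->//|]; exact: path_in h xW pp' _.
apply/subsetP => e /imsetP[i _ ->]; rewrite /f /=.
have iv : i < n := ltn_ord i.
case: (ltnP i.+1 n) => hi.
  rewrite modn_small // in_setU1; apply/orP; right.
  apply: adj_in; move/pathP: pp' => /(_ x i); apply; exact: hi.
have ei : (i : nat) = size p'.
  by move: hi iv; rewrite /n /s /=; move: (nat_of_ord i) => k; lia.
have -> : i.+1 = n by rewrite /n /s /= ei.
rewrite modnn /= ei.
have -> : nth x (x :: p') (size p') = y.
  by rewrite ly -[size p']/((size (x :: p')).-1) nth_last.
by rewrite setUC setU11.
Qed.

Lemma cycle_exists W F : wf W F -> #|W| < kappa_on W F + #|F| ->
  exists UC, cycle_subgraph W F UC.
Proof.
elim/set_ind: F => [|F e eF IH] h; first by rewrite kappa_set0 cards0 addn0 ltnn.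
have [x [y [xy ee xW yW]]] := h e (setU11 _ _).
have hF : wf W F by apply: wf_sub h; exact: subsetUr.
rewrite cardsU1 eF add1n => lt.
case: (ltnP #|W| (kappa_on W F + #|F|)) => lt2.
  have [UC cy] := IH hF lt2; exists UC; apply: cycle_mono cy _ _ => //.
  exact: subsetUr.
case: (boolP (conn F x y)) => cxy.
  by rewrite ee; apply: cycle_from_path => //; rewrite -ee.
have := kappa_add_disc xW yW cxy; rewrite -ee => kk.
move: lt lt2; rewrite -kk; move: (kappa_on _ _) #|W| #|F| => a b c; lia.
Qed.

Lemma cycle_mu W F UC : wf W F -> cycle_subgraph W F UC ->
  #|W| < kappa_on W F + #|F|.
Proof.
move=> h cy; have [n [f [n3 fi e1 e2 [_ sF]]]] := cycleP cy.
have i0 : 'I_n by exists 0; lia.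
set e := [set f i0; f (ordS i0)].
have eC : e \in UC.2 by rewrite e2; apply/imsetP; exists i0.
have eF : e \in F := subsetP sF _ eC.
have := kappa_lb (wf_sub (subsetDl F [set e]) h).
rewrite (kappa_conn_eq W (cycle_edge_conn cy eC)).
rewrite [#|F|](cardsD1 e) eF; move: (kappa_on _ _) #|W| #|F :\ e| => a b c; lia.
Qed.


Lemma cycle_sub W F W' F' UC : cycle_subgraph W F UC -> UC.1 \subset W' -> UC.2 \subset F' ->
  cycle_subgraph W' F' UC.
Proof. by case/and3P => _ _ h s1 s2; rewrite /cycle_subgraph h s1 s2. Qed.

Lemma cycle_edge W F UC : cycle_subgraph W F UC -> exists e, e \in UC.2.
Proof.
case/cycleP => n [f [n3 fi e1 e2 _]].
have i0 : 'I_n by exists 0; lia.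
by exists [set f i0; f (ordS i0)]; rewrite e2; apply/imsetP; exists i0.
Qed.

Lemma cycle_edgeF W F UC e : cycle_subgraph W F UC -> e \in UC.2 -> e \in F.
Proof. by case/and3P => _ sF _ /(subsetP sF). Qed.

Lemma cycles_le1 W F : wf W F -> kappa_on W F + #|F| <= #|W|.+1 -> cycles_on W F <= 1.
Proof.
move=> h hk.
have key : forall A B, cycle_subgraph W F A -> cycle_subgraph W F B -> A.2 \subset B.2.
  move=> A B cA cB; apply/subsetP => e eA; apply/negPn/negP => eB.
  have eF := cycle_edgeF cA eA.
  have cB' : cycle_subgraph W (F :\ e) B.
    apply: (cycle_sub cB); first by case/and3P: cB.
    apply/subsetP => e' e'B; rewrite !inE (cycle_edgeF cB e'B) andbT.
    by apply/eqP => ee; rewrite -ee e'B in eB.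
  have := cycle_mu (wf_sub (subsetDl F [set e]) h) cB'.
  rewrite (kappa_conn_eq W (cycle_edge_conn cA eA)).
  move: hk; rewrite [#|F|](cardsD1 e) eF.
  move: (kappa_on _ _) #|W| #|F :\ e| => a b c; lia.
apply/card_le1_eqP => A B; rewrite !inE => cA cB.
have e2 : A.2 = B.2 by apply/eqP; rewrite eqEsubset !key.
have e1 : A.1 = B.1.
  by apply/setP => z; rewrite (cycle_vert _ cA) (cycle_vert _ cB) e2.
by move: e1 e2; clear; case: A B => [a1 a2] [b1 b2] /= -> ->.
Qed.

Lemma cycles_ge2 W F : wf W F -> #|W|.+1 < kappa_on W F + #|F| -> 1 < cycles_on W F.
Proof.
move=> h hk.
have [A cA] := cycle_exists h (ltnW hk).
have [e eA] := cycle_edge cA.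
have eF := cycle_edgeF cA eA.
have [B cB] : exists B, cycle_subgraph W (F :\ e) B.
  apply: cycle_exists; first exact: wf_sub (subsetDl F [set e]) h.
  rewrite (kappa_conn_eq W (cycle_edge_conn cA eA)).
  move: hk; rewrite [#|F|](cardsD1 e) eF.
  move: (kappa_on _ _) #|W| #|F :\ e| => a b c; lia.
apply/card_gt1P; exists A, B; rewrite !inE cA.
have sB : B.2 \subset F :\ e by case/and3P: cB.
have sB1 : B.1 \subset W by case/and3P: cB.
rewrite (cycle_sub cB sB1 (subset_trans sB (subsetDl F [set e]))) /=.
split => //; apply/eqP => AB; subst B.
by have := cycle_edgeF cB eA; rewrite !inE eqxx.
Qed.

Lemma cycles_eq1 W F : wf W F -> kappa_on W F + #|F| = #|W|.+1 -> cycles_on W F = 1.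
Proof.
move=> h hk; apply/eqP; rewrite eqn_leq cycles_le1 ?hk //=.
have [A cA] : exists A, cycle_subgraph W F A by apply: cycle_exists h _; rewrite hk.
by apply/card_gt0P; exists A; rewrite inE.
Qed.

Lemma cycle_conn W F UC z t : cycle_subgraph W F UC -> z \in UC.1 -> t \in UC.1 ->
  conn F z t.
Proof.
move=> cy; have [n [f [n3 fi e1 e2 [_ sF]]]] := cycleP cy.
have n0 : 0 < n by lia.
pose i0 : 'I_n := Ordinal n0.
have ch : forall k, conn F (f i0) (f (iter k (@ordS n) i0)).
  elim=> [|k IH] /=; first exact: conn0.
  apply: (conn_trans IH); set j := iter k _ _.
  apply: conn1; first by rewrite (inj_eq fi) eq_sym ordS_neq // ltnW.
  by apply: (subsetP sF); rewrite e2; apply/imsetP; exists j.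
have ch' : forall j, conn F (f i0) (f j).
  move=> j; suff -> : j = iter j (@ordS n) i0 by [].
  by apply: val_inj; rewrite iter_ordS /= add0n modn_small.
rewrite e1 => /imsetP[j1 _ ->] /imsetP[j2 _ ->].
by apply: conn_trans (ch' j2); rewrite conn_sym.
Qed.

Lemma conn_ind E (K : {set V}) x y : (forall u v, u \in K -> adj E u v -> v \in K) -> x \in K ->
  conn E x y -> conn (induced E K) x y.
Proof.
move=> cl xK /connectP[p pp ->]; elim: p x xK pp => [|q p IH] x xK /=.
  by rewrite conn0.
case/andP => xq pq; have qK := cl _ _ xK xq.
apply: conn_trans (IH _ qK pq); case/andP: xq => xq e.
by apply: conn1 => //; rewrite inE e subUset !sub1set xK qK.
Qed.

Lemma kappa_comp1 E x : kappa_on (comp_of E setT x) (induced E (comp_of E setT x)) = 1.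
Proof.
set K := comp_of E setT x.
have KE : forall y, (y \in K) = conn E x y by move=> y; rewrite inE in_setT.
have cl : forall u v, u \in K -> adj E u v -> v \in K.
  by move=> u v; rewrite !KE => h1 h2; apply: conn_trans h1 (connect1 h2).
rewrite /kappa_on.
suff -> : [set comp_of (induced E K) K z | z in K] = [set K] by rewrite cards1.
apply/setP => Y; rewrite inE; apply/imsetP/eqP => [[z zK ->]|->].
  apply/setP => w; rewrite inE; case: (boolP (w \in K)) => //= wK.
  apply: (conn_ind cl zK).
  by move: zK wK; rewrite !KE => h1 h2; rewrite conn_sym in h1; apply: conn_trans h1 h2.
exists x; first by rewrite KE conn0.
have xK : x \in K by rewrite KE conn0.
apply/setP => w; rewrite [RHS]inE; case: (boolP (w \in K)) => //= wK.
by rewrite (conn_ind cl xK) // -KE.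
Qed.

Lemma wf_ind E (K : {set V}) : simple_graph E -> wf K (induced E K).
Proof.
move=> /forallP sE e; rewrite inE => /andP[eE eK].
have /cards2P[x [y [xy ee]]] : #|e| == 2 by have := sE e; rewrite eE.
exists x, y; split => //; apply: (subsetP eK); rewrite ee !inE eqxx ?orbT //.
Qed.


Notation K E x := (comp_of E [set: V] x).

Lemma KE E x y : (y \in K E x) = conn E x y.
Proof. by rewrite inE in_setT. Qed.

Definition PI E := simple_graph E /\ forall x, #|induced E (K E x)| = #|K E x|.

Lemma PI_unicyc E x : PI E -> unicyclic_on (K E x) (induced E (K E x)).
Proof.
case=> sE h; rewrite /unicyclic_on kappa_comp1 eqxx /=.
by rewrite cycles_eq1 ?kappa_comp1 ?h //; apply: wf_ind.
Qed.

Lemma PI_pf E : PI E -> pseudoforest E.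
Proof. by move=> h; apply/forallP => x; rewrite PI_unicyc ?orbT. Qed.

Lemma comps_le1 E x y : kappa E <= 1 -> K E x = K E y.
Proof.
move/card_le1_eqP => h; apply: h; exact: imset_f.
Qed.

Lemma PI_final E : PI E -> kappa E <= 1 -> 0 < #|V| -> unicyclic E.
Proof.
move=> pi k1 /card_gt0P[x0 _].
have KT : K E x0 = setT.
  apply/setP => y; rewrite in_setT (comps_le1 x0 y k1) KE conn0 //.
have iT : induced E setT = E by apply/setP => e; rewrite inE subsetT andbT.
by have := PI_unicyc x0 pi; rewrite KT iT.
Qed.

Lemma pf_le1 E x : pseudoforest E -> cycles_on (K E x) (induced E (K E x)) <= 1.
Proof.
move/forallP/(_ x)/orP => [/andP[_ /eqP->]|/andP[_ /eqP->]] //.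
Qed.

Lemma init E : simple_graph E -> pseudoforest E -> cycles E = kappa E -> PI E.
Proof.
move=> sE pf ck.
have c1 : forall x, cycles_on (K E x) (induced E (K E x)) = 1.
  move=> x0; apply/eqP; apply/negP => /negP ne.
  have c0 : cycles_on (K E x0) (induced E (K E x0)) = 0.
    by move: (pf_le1 x0 pf) ne; case: (cycles_on _ _) => [|[]].
  pose g (UC : {set V} * {set {set V}}) := K E (odflt x0 [pick z in UC.1]).
  set Cy := [set UC | cycle_subgraph setT E UC].
  have gcy : forall UC, UC \in Cy -> exists2 z, g UC = K E z &
      cycle_subgraph (K E z) (induced E (K E z)) UC.
    move=> UC; rewrite inE => cy.
    have [n [f [n3 fi e1 e2 _]]] := cycleP cy.
    have i0 : 'I_n by exists 0; lia.
    have zU : f i0 \in UC.1 by rewrite e1 imset_f.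
    rewrite /g; case: pickP => [z zU' /=|/(_ (f i0)) /negP //].
    exists z => //; apply: (cycle_sub cy).
      by apply/subsetP => t tU; rewrite KE (cycle_conn cy zU').
    apply/subsetP => e eC; rewrite inE (cycle_edgeF cy eC) /=.
    apply/subsetP => t te; rewrite KE (cycle_conn cy zU') //.
    by rewrite (cycle_vert _ cy); apply/existsP; exists e; rewrite eC.
  have ginj : {in Cy &, injective g}.
    move=> A B Ain Bin gAB.
    have [z gA cA] := gcy A Ain; have [z' gB cB] := gcy B Bin.
    rewrite gA gB in gAB; rewrite -gAB in cB.
    by move/card_le1_eqP: (pf_le1 z pf); apply; rewrite inE.
  have gsub : g @: Cy \subset [set K E z | z in setT] :\ K E x0.
    apply/subsetP => Y /imsetP[UC UCin ->]; have [z gz cz] := gcy UC UCin.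
    rewrite !inE gz imset_f ?andbT ?in_setT //.
    apply/eqP => zx; rewrite zx in cz.
    have : UC \in [set UC | cycle_subgraph (K E x0) (induced E (K E x0)) UC].
      by rewrite inE.
    by move: c0; rewrite /cycles_on => /cards0_eq ->; rewrite inE.
  have := subset_leq_card gsub; rewrite card_in_imset //.
  have -> : #|Cy| = kappa E by rewrite -ck.
  have := cardsD1 (K E x0) [set K E z | z in [set: V]].
  rewrite imset_f ?in_setT // /kappa /kappa_on /=.
  move: #|_ :\ _| #|_| => a b; lia.
split => // x; have := c1 x.
have h := @wf_ind E (K E x) sE.
have k1 := kappa_comp1 E x.
move=> cx; apply/eqP; rewrite eqn_leq; apply/andP; split.
  rewrite leqNgt; apply/negP => lt.
  have H := cycles_ge2 h; rewrite k1 cx ltnn in H.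
  suff : false by []. apply: H.
  move: lt; move: #|induced _ _| #|K E x| => a b; lia.
have /card_gt0P[A] : 0 < cycles_on (K E x) (induced E (K E x)) by rewrite cx.
rewrite inE => /(cycle_mu h); rewrite k1 add1n ltnS //.
Qed.


Lemma cyc_edge E (w : V) : PI E -> exists (a b : V) (UC : {set V} * {set {set V}}), [/\ a != b, [set a; b] \in UC.2,
  cycle_subgraph setT E UC & forall e', e' \in UC.2 -> e' \subset K E w].
Proof.
case=> sE hE.
have h := @wf_ind E (K E w) sE.
have [UC cy] : exists UC, cycle_subgraph (K E w) (induced E (K E w)) UC.
  by apply: cycle_exists h _; rewrite kappa_comp1 hE add1n.
have [n [f [n3 fi e1 e2 [_ sF]]]] := cycleP cy.
have i0 : 'I_n by exists 0; lia.
exists (f i0), (f (ordS i0)), UC; split.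
- by rewrite (inj_eq fi) eq_sym ordS_neq // ltnW.
- by rewrite e2; apply/imsetP; exists i0.
- apply: (cycle_sub cy); first exact: subsetT.
  by apply: subset_trans sF _; apply/subsetP => e; rewrite inE => /andP[].
- by move=> e' /(subsetP sF); rewrite inE => /andP[].
Qed.

Lemma sub2 (p q : V) (A : {set V}) : ([set p; q] \subset A) = (p \in A) && (q \in A).
Proof. by rewrite subUset !sub1set. Qed.

Lemma step E : PI E -> 1 < kappa E ->
  exists A, [/\ pswitch E A, PI (tau A E) & kappa (tau A E) < kappa E].
Proof.
move=> pi k2; have [sE hE] := pi.
have [u [v nuv]] : exists u v, ~~ conn E u v.
  case: (boolP [exists u, exists v, ~~ conn E u v]).
    by case/existsP => u /existsP[v h]; exists u, v.
  rewrite negb_exists => /forallP h.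
  suff : kappa E <= 1 by rewrite leqNgt k2.
  apply/card_le1_eqP => Y Z /imsetP[y _ ->] /imsetP[z _ ->].
  apply/eqP; rewrite comp_eq ?in_setT //.
  by have := h z; rewrite negb_exists => /forallP /(_ y); rewrite negbK.
have [a [b [UCu [ab abC cyu subu]]]] := cyc_edge u pi.
have [c [d [UCv [cd cdC cyv subv]]]] := cyc_edge v pi.
have [ua ub] : conn E u a /\ conn E u b.
  by have := subu _ abC; rewrite sub2 !KE => /andP[].
have [vc vd] : conn E v c /\ conn E v d.
  by have := subv _ cdC; rewrite sub2 !KE => /andP[].
have nc : forall p q, conn E u p -> conn E v q -> ~~ conn E p q.
  move=> p q up vq; apply/negP => pq; move/negP: nuv; apply.
  by apply: (conn_trans (conn_trans up pq)); rewrite conn_sym.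
have nac := nc _ _ ua vc; have nad := nc _ _ ua vd.
have nbc := nc _ _ ub vc; have nbd := nc _ _ ub vd.
have neq : forall p q, ~~ conn E p q -> p != q.
  by move=> p q h; apply/eqP => pq; rewrite pq conn0 in h.
have ba : conn E b a by move: ub; rewrite conn_sym => ub; apply: conn_trans ub ua.
have cd' : conn E c d by move: vc; rewrite conn_sym => vc; apply: conn_trans vc vd.
have abE := cycle_edgeF cyu abC; have cdE := cycle_edgeF cyv cdC.
have acE : [set a; c] \notin E.
  by apply/negP => h; have := conn1 (neq _ _ nac) h; rewrite (negbTE nac).
have bdE : [set b; d] \notin E.
  by apply/negP => h; have := conn1 (neq _ _ nbd) h; rewrite (negbTE nbd).
have disj : [disjoint [set a; b] & [set c; d]].
  rewrite disjoints_subset subUset !sub1set !inE !negb_or.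
  by rewrite (neq _ _ nac) (neq _ _ nad) (neq _ _ nbc) (neq _ _ nbd).
have inter : interchangeable E (a, b, c, d) by rewrite /interchangeable abE cdE disj acE bdE.
exists (a, b, c, d).
rewrite /tau inter.
set F2 := (E :\ [set a; b]) :\ [set c; d].
set E' := F2 :|: [set [set a; c]; [set b; d]].
have c1 : conn (E :\ [set a; b]) =2 conn E := cycle_edge_conn cyu abC.
have cyv' : cycle_subgraph setT (E :\ [set a; b]) UCv.
  apply: (cycle_sub cyv); first exact: subsetT.
  apply/subsetP => e eC; rewrite !inE (cycle_edgeF cyv eC) andbT.
  apply/eqP => ee; have := subv _ eC; rewrite ee sub2 !KE => /andP[va _].
  by have := nc _ _ ua va; rewrite conn0.
have c12 : conn F2 =2 conn E.
  by move=> z w; rewrite (cycle_edge_conn cyv' cdC) c1.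
set F3 := [set a; c] |: F2.
have cF3 : forall z w, conn F3 z w =
    [|| conn E z w, conn E z a && conn E c w | conn E z c && conn E a w].
  by move=> z w; rewrite conn_add !c12.
have cbd : conn F3 b d by rewrite cF3 ba cd' orbT.
have eE' : E' = [set b; d] |: F3.
  apply/setP => e; rewrite /E' /F3 !inE.
  by case: (e == [set b; d]); case: (e == [set a; c]); rewrite ?orbT ?orbF.
have CE : forall z w, conn E' z w =
    [|| conn E z w, conn E z a && conn E c w | conn E z c && conn E a w].
  by move=> z w; rewrite eE' conn_add_conn // cF3.
have kE' : (kappa E').+1 = kappa E.
  have eq1 : conn E' =2 conn F3 by move=> z w; rewrite CE cF3.
  rewrite /kappa (kappa_conn_eq _ eq1) kappa_add_disc ?in_setT ?c12 //.
  exact: kappa_conn_eq.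
have simE' : simple_graph E'.
  apply/forallP => e; apply/implyP; rewrite /E' !inE.
  case/orP => [/andP[_ /andP[_ eE]]|/orP[]/eqP->].
  - by move/forallP: sE => /(_ e); rewrite eE.
  - by rewrite cards2 neq.
  - by rewrite cards2 neq.
have abE' : [set a; b] \notin E'.
  rewrite /E' !inE eqxx /= andbF /=; apply/norP; split; apply/eqP => e.
    have : b \in [set a; c] by rewrite -e !inE eqxx orbT.
    rewrite !inE => /orP[]/eqP e'.
      by move: ab; rewrite e' eqxx.
    by move: (neq _ _ nbc); rewrite e' eqxx.
  have : a \in [set b; d] by rewrite -e !inE eqxx.
  rewrite !inE => /orP[]/eqP e'.
    by move: ab; rewrite e' eqxx.
  by move: (neq _ _ nad); rewrite e' eqxx.
have piE' : PI E'.
  split => // x.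
  case: (boolP (conn E' x a)) => xa; last first.
    have xa' : ~~ conn E x a by apply: contra xa; rewrite CE => ->.
    have xc' : ~~ conn E x c.
      by apply: contra xa => h; rewrite CE h conn0 !orbT.
    have xb : ~~ conn E x b by apply: contra xa' => h; apply: conn_trans h ba.
    have xd : ~~ conn E x d.
      apply: contra xc' => h; apply: (conn_trans h); by rewrite conn_sym.
    have eK : K E' x = K E x.
      by apply/setP => y; rewrite !KE CE (negbTE xa') (negbTE xc') /= !orbF.
    have eI : induced E' (K E x) = induced E (K E x).
      apply/setP => e; rewrite !inE.
      case: (boolP (e \subset K E x)) => sx; last by rewrite !andbF.
      have nn : forall p q, ~~ conn E x p -> e != [set p; q].
        move=> p q h; apply/eqP => ee; move: sx; rewrite ee sub2 !KE.
        by rewrite (negbTE h).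
      by rewrite !andbT (nn _ _ xa') (nn _ _ xc') /= (negbTE (nn _ _ xa')) (negbTE (nn _ _ xb)) !orbF.
    by rewrite eK eI hE.
  set Ka := K E a; set Kc := K E c.
  have eK : K E' x = Ka :|: Kc.
    apply/setP => y; rewrite in_setU !KE.
    have -> : conn E' x y = conn E' a y.
      apply/idP/idP => h; last exact: conn_trans xa h.
      by move: xa; rewrite conn_sym => xa; apply: conn_trans xa h.
    by rewrite CE conn0 (negbTE nac) /= orbF.
  have spl : forall e, e \in E -> (e \subset Ka :|: Kc) = (e \subset Ka) || (e \subset Kc).
    move=> e eE.
    have /cards2P[p [q [pq ee]]] : #|e| == 2 by move/forallP: sE => /(_ e); rewrite eE.
    have cpq : conn E p q by apply: conn1 => //; rewrite -ee.
    rewrite ee !sub2 !in_setU !KE.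
    case: (boolP (conn E a p)) => ap; case: (boolP (conn E c p)) => cp /=.
    - have : conn E a c by apply: (conn_trans ap); rewrite conn_sym.
      by rewrite (negbTE nac).
    - by rewrite (conn_trans ap cpq).
    - by rewrite (conn_trans cp cpq) !orbT.
    - by [].
  have cKa : #|Ka :|: Kc| = #|Ka| + #|Kc|.
    rewrite cardsU; suff -> : Ka :&: Kc = set0 by rewrite cards0 subn0.
    apply/setP => z; rewrite !inE; apply/negP => /andP[h1 h2].
    have : conn E a c by apply: (conn_trans h1); rewrite conn_sym.
    by rewrite (negbTE nac).
  set S := induced E Ka :|: induced E Kc.
  have cS : #|S| = #|induced E Ka| + #|induced E Kc|.
    rewrite cardsU; suff -> : induced E Ka :&: induced E Kc = set0 by rewrite cards0 subn0.
    apply/setP => e; rewrite !inE; apply/negP => /andP[/andP[eE s1] /andP[_ s2]].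
    have /cards2P[p [q [pq ee]]] : #|e| == 2 by move/forallP: sE => /(_ e); rewrite eE.
    move: s1 s2; rewrite ee !sub2 !KE => /andP[h1 _] /andP[h2 _].
    have : conn E a c by apply: (conn_trans h1); rewrite conn_sym.
    by rewrite (negbTE nac).
  set T := S :\ [set a; b] :\ [set c; d].
  have eI : induced E' (Ka :|: Kc) = [set a; c] |: ([set b; d] |: T).
    apply/setP => e; rewrite !inE.
    case: (eqVneq e [set a; c]) => [->|eac] /=.
      by rewrite orbT /= sub2 !in_setU !KE !conn0 orbT.
    case: (eqVneq e [set b; d]) => [->|ebd] /=.
      by rewrite orbT /= sub2 !in_setU !KE conn_sym ba cd' orbT.
    rewrite !orbF; case: (boolP (e \in E)) => eE; last by rewrite !andbF.
    by rewrite spl //; case: (e != [set c; d]); case: (e != [set a; b]).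
  have abS : [set a; b] \in S by rewrite !inE abE sub2 !KE conn0 conn_sym ba.
  have cdab : [set c; d] != [set a; b].
    apply/eqP => ee; have : a \in [set c; d] by rewrite ee !inE eqxx.
    rewrite !inE => /orP[]/eqP e'.
      by move: (neq _ _ nac); rewrite e' eqxx.
    by move: (neq _ _ nad); rewrite e' eqxx.
  have cdS : [set c; d] \in S :\ [set a; b].
      by rewrite !inE cdab cdE /= !sub2 !KE conn0 cd' orbT.
  have bdT : [set b; d] \notin T by rewrite !inE (negbTE bdE) !andbF.
  have acT : [set a; c] \notin [set b; d] |: T.
    rewrite !inE (negbTE acE) !andbF orbF; apply/eqP => e.
    have : a \in [set b; d] by rewrite -e !inE eqxx.
    rewrite !inE => /orP[]/eqP e'.
      by move: ab; rewrite e' eqxx.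
    by move: (neq _ _ nad); rewrite e' eqxx.
  rewrite eK eI cardsU1 acT cardsU1 bdT cKa -!hE -/Ka -/Kc -cS.
  rewrite (cardsD1 [set a; b] S) abS (cardsD1 [set c; d] (S :\ [set a; b])) cdS.
  by rewrite -/T.
split; last by rewrite -kE'.
- rewrite /pswitch /tau inter -/F2 -/E' (PI_pf pi) (PI_pf piE') andbT /=.
  by apply/eqP => e; rewrite e abE in abE'.
- exact: piE'.
Qed.

End G.

Unset Implicit Arguments.

Theorem lemma5p5 (V : finType) (E : {set {set V}}) :
  0 < #|V| -> simple_graph E -> pseudoforest E -> cycles E = kappa E ->
  exists (s : seq (V * V * V * V)) (E' : {set {set V}}),
    pswitch_seq E s E' /\ unicyclic E'.
Proof.
move=> V0 sE pf ck; have pi := init sE pf ck.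
have : kappa E <= kappa E by [].
move: {2}(kappa E) => n; clear sE pf ck.
elim: n E pi => [|n IH] E pi kn.
  by exists [::], E; split => //; apply: PI_final pi _ V0; apply: leq_trans kn _.
case: (leqP (kappa E) 1) => k1.
  by exists [::], E; split => //; apply: PI_final.
have [A [psA piA kA]] := step pi k1.
have kn' : kappa (tau A E) <= n by rewrite -ltnS; apply: leq_trans kA kn.
have [s [E' [ps u]]] := IH _ piA kn'.
by exists (A :: s), E'; split.
Qed.
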